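(* Let $(G,t)$ be an infinite biosphere. Then: (1) $\mathrm{CONV}$ is upward generic; (2) $\mathrm{CA}$ is upward generic; (3) $\mathrm{REF}$ is upward generic; (4) $\mathrm{IAP}\cap\mathrm{CONV}\cap\mathrm{CA}\cap\mathrm{REF}$ is upward generic.
   Context: An infinite biosphere is a directed graph $G$ together with a function $t$ assigning a real number $t(v)$ to each vertex, such that: (1) if $v$ is a parent of $w$ (edge from $v$ to $w$) then $t(v)<t(w)$; (2) for every $r\in\mathbb R$ at most finitely many vertices $v$ have $t(v)<r$; (3) every vertex has finitely many children; (4) $G$ is infinite. $v$ is an ancestor of $w$ (and $w$ a descendant of $v$) if there is a directed path $v=v_1,\dots,v_n=w$ with $n>1$. A $G$-subset is a set of vertices. Define the following sets of $G$-subsets: $\mathrm{IAP}$: those $S$ such that no $v\in S$ has both infinitely many descendants in $S$ and infinitely many non-descendants in $S$ (identical ancestor point axiom). $\mathrm{CONV}$: those $S$ such that every $v\in G$ having an ancestor in $S$ and a descendant in $S$ lies in $S$. $\mathrm{CA}$: those $S$ for which there exists $v\in S$ such that every $w\in S$ with $w\neq v$ is a descendant of $v$ (common ancestor property). $\mathrm{REF}$: those $S$ such that every $v\in S$ which has infinitely many descendants in $G$ has infinitely many descendants in $S$ (reflection property). For a nonempty linear order $(X,<)$, an ascending chain of $G$-subsets indexed by $X$ is a family $\{C_\alpha\}_{\alpha\in X}$ with $C_\alpha\subseteq C_\beta$ whenever $\alpha<\beta$. A set $T$ of $G$-subsets is upward generic if for every ascending chain $\{C_\alpha\}_{\alpha\in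 X}$ of nonempty $G$-subsets with each $C_\alpha\in T$, $\bigcup_\alpha C_\alpha\in T$. *)

(* Defs.v *)
From Stdlib Require Import Reals List Relations.
Open Scope R_scope.

Definition finite_pred {V : Type} (P : V -> Prop) : Prop :=
  exists l : list V, forall x, P x -> In x l.

Definition infinite_pred {V : Type} (P : V -> Prop) : Prop := ~ finite_pred P.

(* A directed graph is given by a vertex type V and an edge relation E:
   E v w means "v is a parent of w" (edge from v to w). *)
Definition is_infinite_biosphere (V : Type) (E : V -> V -> Prop) (t : V -> R) : Prop :=
  (forall v w, E v w -> t v < t w) /\
  (forall r : R, finite_pred (fun v => t v < r)) /\
  (forall v, finite_pred (fun w => E v w)) /\
  infinite_pred (fun _ : V => True).

Definition ancestor {V : Type} (E : V -> V -> Prop) : V -> V -> Prop :=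
  clos_trans V E.

Definition gsubset (V : Type) := V -> Prop.

Definition IAP {V : Type} (E : V -> V -> Prop) (S : gsubset V) : Prop :=
  forall v, S v ->
    ~ (infinite_pred (fun w => S w /\ ancestor E v w) /\
       infinite_pred (fun w => S w /\ ~ ancestor E v w)).

Definition CONV {V : Type} (E : V -> V -> Prop) (S : gsubset V) : Prop :=
  forall v, (exists a, S a /\ ancestor E a v) -> (exists d, S d /\ ancestor E v d) -> S v.

Definition CA {V : Type} (E : V -> V -> Prop) (S : gsubset V) : Prop :=
  exists v, S v /\ forall w, S w -> w <> v -> ancestor E v w.

Definition REF {V : Type} (E : V -> V -> Prop) (S : gsubset V) : Prop :=
  forall v, S v -> infinite_pred (fun w => ancestor E v w) ->
    infinite_pred (fun w => S w /\ ancestor E v w).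

Definition strict_linear_order {X : Type} (lt : X -> X -> Prop) : Prop :=
  (forall a, ~ lt a a) /\
  (forall a b c, lt a b -> lt b c -> lt a c) /\
  (forall a b, lt a b \/ a = b \/ lt b a).

Definition upward_generic {V : Type} (T : gsubset V -> Prop) : Prop :=
  forall (X : Type) (lt : X -> X -> Prop), strict_linear_order lt -> inhabited X ->
  forall C : X -> gsubset V,
    (forall a b, lt a b -> forall v, C a v -> C b v) ->
    (forall a, exists v, C a v) ->
    (forall a, T (C a)) ->
    T (fun v => exists a, C a v).

(* Main.v *)
Require Import Defs.
From Stdlib Require Import Reals.
From Stdlib Require Import Classical List Relations Lra.

Lemma finite_mono {V : Type} (P Q : V -> Prop) :
  (forall x, P x -> Q x) -> finite_pred Q -> finite_pred P.
Proof. intros H [l Hl]. exists l. auto. Qed.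

Lemma infinite_mono {V : Type} (P Q : V -> Prop) :
  (forall x, P x -> Q x) -> infinite_pred P -> infinite_pred Q.
Proof. intros H HP HQ. apply HP. exact (finite_mono P Q H HQ). Qed.

Lemma finite_or {V : Type} (P Q : V -> Prop) :
  finite_pred P -> finite_pred Q -> finite_pred (fun x => P x \/ Q x).
Proof.
  intros [l1 H1] [l2 H2]. exists (l1 ++ l2). intros x [H|H]; apply in_or_app; auto.
Qed.

Lemma finite_bigunion {V I : Type} (P : I -> V -> Prop) (l : list I) :
  (forall i, In i l -> finite_pred (P i)) ->
  finite_pred (fun w => exists i, In i l /\ P i w).
Proof.
  induction l as [|a l IH]; intros H.
  - exists nil. intros x [i [[] _]].
  - destruct (H a (or_introl eq_refl)) as [la Ha].
    destruct IH as [lr Hr]. { intros i Hi. apply H. right. exact Hi. }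
    exists (la ++ lr). intros x [i [[<-|Hi] Hx]]; apply in_or_app.
    + left. auto.
    + right. apply Hr. eauto.
Qed.

Lemma min_exists {V : Type} (f : V -> R) (l : list V) :
  forall P : V -> Prop, (forall x, P x -> In x l) -> (exists x, P x) ->
  exists m, P m /\ forall x, P x -> f m <= f x.
Proof.
  induction l as [|a l IH]; intros P Hl [x Hx].
  - destruct (Hl x Hx).
  - destruct (classic (exists y, P y /\ y <> a)) as [[y [Hy Hya]]|Hno].
    + destruct (IH (fun z => P z /\ z <> a)) as [m [[Hm Hma] Hmin]].
      { intros z [Hz Hza]. destruct (Hl z Hz) as [->|Hin]; [congruence|exact Hin]. }
      { eauto. }
      destruct (classic (P a)) as [Pa|nPa].
      * destruct (Rle_dec (f a) (f m)) as [Hle|Hle].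
        -- exists a. split; [exact Pa|]. intros z Hz.
           destruct (classic (z = a)) as [->|Hza]; [lra|].
           specialize (Hmin z (conj Hz Hza)). lra.
        -- exists m. split; [exact Hm|]. intros z Hz.
           destruct (classic (z = a)) as [->|Hza]; [lra|]. auto.
      * exists m. split; [exact Hm|]. intros z Hz.
        destruct (classic (z = a)) as [->|Hza]; [contradiction|]. auto.
    + exists x. split; [exact Hx|]. intros z Hz.
      assert (x = a) by (apply NNPP; intro; apply Hno; eauto).
      assert (z = a) by (apply NNPP; intro; apply Hno; eauto). subst. lra.
Qed.

Lemma t_anc {V : Type} (E : V -> V -> Prop) (t : V -> R) :
  (forall v w, E v w -> t v < t w) -> forall x y, clos_trans V E x y -> t x < t y.
Proof.
  intros H x y Hxy. induction Hxy; auto. lra.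
Qed.

Definition leo {X : Type} (lt : X -> X -> Prop) a b := a = b \/ lt a b.

Lemma upper {X : Type} (lt : X -> X -> Prop) : strict_linear_order lt ->
  forall a b, exists d, leo lt a d /\ leo lt b d.
Proof.
  intros [_ [_ Htri]] a b. destruct (Htri a b) as [H|[H|H]].
  - exists b. unfold leo. auto.
  - exists b. unfold leo. auto.
  - exists a. unfold leo. auto.
Qed.

Lemma leo_trans {X : Type} (lt : X -> X -> Prop) : strict_linear_order lt ->
  forall a b c, leo lt a b -> leo lt b c -> leo lt a c.
Proof.
  intros [_ [Htr _]] a b c [->|H1] [<-|H2]; unfold leo; eauto.
Qed.

Lemma chain_mono {V X : Type} (lt : X -> X -> Prop) (C : X -> gsubset V) :
  (forall a b, lt a b -> forall v, C a v -> C b v) ->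
  forall a b, leo lt a b -> forall v, C a v -> C b v.
Proof. intros H a b [->|Hab] v Hv; eauto. Qed.

Lemma pathL {V : Type} (E : V -> V -> Prop) : forall x w, clos_trans V E x w ->
  infinite_pred (clos_trans V E x) ->
  finite_pred (clos_trans V E w) ->
  exists q q', (q = x \/ clos_trans V E x q) /\ infinite_pred (clos_trans V E q) /\
    E q q' /\ finite_pred (clos_trans V E q') /\ (q' = w \/ clos_trans V E q' w).
Proof.
  intros x w H. apply clos_trans_t1n in H.
  induction H as [x y Hxy|x y z Hxy Hyz IH]; intros Hinf Hfin.
  - exists x, y. repeat split; auto.
  - destruct (classic (finite_pred (clos_trans V E y))) as [Hf|Hi].
    + exists x, y. repeat split; auto. right. apply clos_t1n_trans. exact Hyz.
    + destruct (IH Hi Hfin) as [q [q' [H1 H2]]]. exists q, q'. split; [|exact H2].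
      right. destruct H1 as [->|H1]; [apply t_step; exact Hxy|].
      eapply t_trans; [apply t_step; exact Hxy|exact H1].
Qed.

Lemma part_conv {V : Type} (E : V -> V -> Prop) : upward_generic (CONV E).
Proof.
  intros X lt Hlo _ C Hmono _ HC v [a [[b Hab] Hav]] [d [[c Hcd] Hvd]].
  destruct (upper lt Hlo b c) as [g [Hbg Hcg]].
  exists g. apply (HC g v).
  - exists a. split; [exact (chain_mono lt C Hmono b g Hbg a Hab)|exact Hav].
  - exists d. split; [exact (chain_mono lt C Hmono c g Hcg d Hcd)|exact Hvd].
Qed.

Lemma part_ref {V : Type} (E : V -> V -> Prop) : upward_generic (REF E).
Proof.
  intros X lt Hlo _ C Hmono _ HC v [a Hav] Hinf.
  eapply infinite_mono; [|exact (HC a v Hav Hinf)].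
  intros w [H1 H2]. split; [exists a; exact H1|exact H2].
Qed.

Lemma part_ca {V : Type} (E : V -> V -> Prop) (t : V -> R) :
  is_infinite_biosphere V E t -> upward_generic (CA E).
Proof.
  intros [Ht [Hfin _]] X lt Hlo [a0] C Hmono _ HC.
  destruct (HC a0) as [r0 [Hr0 Hroot0]].
  set (P := fun u => exists g, leo lt a0 g /\ C g u /\
             (forall w, C g w -> w <> u -> ancestor E u w)).
  destruct (Hfin (t r0 + 1)) as [l Hl].
  destruct (min_exists t l P) as [m [[g [Hg [Hmg Hroot]]] Hmin]].
  { intros u [g [Hg [Hug Hr]]]. apply Hl.
    assert (Hr0g : C g r0) by exact (chain_mono lt C Hmono a0 g Hg r0 Hr0).
    destruct (classic (r0 = u)) as [->|Hne]; [lra|].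
    pose proof (t_anc E t Ht _ _ (Hr r0 Hr0g Hne)). lra. }
  { exists r0, a0. split; [left; reflexivity|]. split; assumption. }
  exists m. split; [exists g; exact Hmg|].
  intros w [a Haw] Hwm.
  destruct (upper lt Hlo a g) as [d [Had Hgd]].
  destruct (HC d) as [r [Hrd Hrootd]].
  assert (Hr : r = m).
  { assert (Pr : P r) by (exists d; split; [exact (leo_trans lt Hlo _ _ _ Hg Hgd)|split; assumption]).
    pose proof (Hmin r Pr).
    apply NNPP; intro Hne.
    assert (Hmd : C d m) by exact (chain_mono lt C Hmono g d Hgd m Hmg).
    pose proof (t_anc E t Ht _ _ (Hrootd m Hmd (fun e => Hne (eq_sym e)))). lra. }
  subst r. apply Hrootd; [exact (chain_mono lt C Hmono a d Had w Haw)|exact Hwm].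
Qed.

Lemma part_iap {V : Type} (E : V -> V -> Prop) (t : V -> R) :
  is_infinite_biosphere V E t ->
  forall (X : Type) (lt : X -> X -> Prop), strict_linear_order lt ->
  forall C : X -> gsubset V,
    (forall a b, lt a b -> forall v, C a v -> C b v) ->
    (forall a, IAP E (C a)) -> (forall a, CONV E (C a)) -> (forall a, REF E (C a)) ->
    CONV E (fun v => exists a, C a v) -> CA E (fun v => exists a, C a v) ->
    IAP E (fun v => exists a, C a v).
Proof.
  intros [Ht [_ [Hch _]]] X lt Hlo C Hmono HIAP HCONV HREF HSconv HSca.
  intros v [a Hva] [Hdesc Hnd]. apply Hnd.
  destruct HSca as [u [[g Hug] Hroot]].
  destruct (upper lt Hlo a g) as [N [HaN HgN]].
  pose proof (chain_mono lt C Hmono a N HaN v Hva) as HvN.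
  pose proof (chain_mono lt C Hmono g N HgN u Hug) as HuN.
  assert (Hinfv : infinite_pred (fun w => ancestor E v w)).
  { eapply infinite_mono; [|exact Hdesc]. intros w [_ H]; exact H. }
  pose proof (HREF N v HvN Hinfv) as HinfvN.
  assert (Hfin0 : finite_pred (fun w => C N w /\ ~ ancestor E v w)).
  { apply NNPP. intro H. exact (HIAP N v HvN (conj HinfvN H)). }
  assert (Claim : forall w, (exists b, C b w) -> ~ ancestor E v w ->
            infinite_pred (fun y => ancestor E w y) -> C N w).
  { intros w [m Hwm] Hnw Hinfw.
    destruct Hlo as [Hirr [Htr Htri]].
    destruct (Htri N m) as [H|[H|H]].
    - destruct (classic (w = u)) as [->|Hne]; [exact HuN|].
      assert (Hanc : ancestor E u w) by (apply Hroot; [exists m; exact Hwm|exact Hne]).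
      pose proof (HREF m w Hwm Hinfw) as HinfwC.
      assert (Hfinw : finite_pred (fun y => C m y /\ ~ ancestor E w y)).
      { apply NNPP. intro Hc. exact (HIAP m w Hwm (conj HinfwC Hc)). }
      destruct (classic (exists y, C N y /\ ancestor E w y)) as [Hy|Hny].
      + apply (HCONV N w); [exists u; split; assumption|exact Hy].
      + exfalso. apply HinfvN. eapply finite_mono; [|exact Hfinw].
        intros y [HyN Hvy]. split; [exact (Hmono N m H y HyN)|].
        intro Hwy. apply Hny. eauto.
    - subst. exact Hwm.
    - exact (Hmono m N H w Hwm). }
  destruct Hfin0 as [l0 Hl0].
  destruct (classic (u = v)) as [Huv|Huv].
  { subst u. exists (v :: nil). intros w [Hw Hnw].
    destruct (classic (w = v)) as [->|Hne]; [left; reflexivity|].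
    exfalso. apply Hnw. apply Hroot; assumption. }
  assert (Huv' : ancestor E u v) by (apply Hroot; [exists a; exact Hva|congruence]).
  assert (Hinfu : infinite_pred (clos_trans V E u)).
  { eapply infinite_mono; [|exact Hinfv]. intros w Hw. eapply t_trans; eassumption. }
  set (F := fun w => exists q, In q l0 /\ (fun q w => exists q', E q q' /\
        finite_pred (clos_trans V E q') /\ (w = q' \/ clos_trans V E q' w)) q w).
  assert (HF : finite_pred F).
  { apply finite_bigunion. intros q _.
    destruct (Hch q) as [lc Hlc].
    eapply finite_mono; cycle 1.
    - apply (finite_bigunion (fun q' w => finite_pred (clos_trans V E q') /\
               (w = q' \/ clos_trans V E q' w)) lc).
      intros q' _. destruct (classic (finite_pred (clos_trans V E q'))) as [[l' Hl']|Hn].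
      + exists (q' :: l'). intros w [_ [->|Hw]]; [left; reflexivity|right; auto].
      + exists nil. intros w [Hf _]. contradiction.
    - intros w [q' [Hqq' Hrest]]. exists q'. split; [apply Hlc; exact Hqq'|exact Hrest]. }
  eapply finite_mono; [|exact (finite_or _ _ (ex_intro _ l0 (fun x H => H)) HF)].
  intros w [Hw Hnw].
  destruct (classic (C N w)) as [HwN|HwN]; [left; apply Hl0; split; assumption|right].
  assert (Hfw : finite_pred (clos_trans V E w)).
  { apply NNPP. intro Hi. apply HwN. apply Claim; assumption. }
  assert (Hne : w <> u) by (intro; subst; contradiction).
  assert (Huw : ancestor E u w) by (apply Hroot; assumption).
  destruct (pathL E u w Huw Hinfu Hfw) as [q [q' [Hq [Hqinf [Hqq' [Hq'f Hq'w]]]]]].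
  assert (Hqw : clos_trans V E q w).
  { destruct Hq'w as [<-|H]; [apply t_step; exact Hqq'|].
    eapply t_trans; [apply t_step; exact Hqq'|exact H]. }
  assert (HqS : exists b, C b q).
  { destruct Hq as [->|Hq]; [exists g; exact Hug|].
    apply HSconv; [exists u; split; [exists g; exact Hug|exact Hq]|exists w; split; [exact Hw|exact Hqw]]. }
  assert (Hnq : ~ ancestor E v q).
  { intro H. apply Hnw. eapply t_trans; [exact H|exact Hqw]. }
  exists q. split.
  - apply Hl0. split; [apply Claim; assumption|exact Hnq].
  - exists q'. split; [exact Hqq'|split; [exact Hq'f|destruct Hq'w as [<-|H]; auto]].
Qed.

Theorem mainTheorem5 (V : Type) (E : V -> V -> Prop) (t : V -> R) :
  is_infinite_biosphere V E t ->
  upward_generic (CONV E) /\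
  upward_generic (CA E) /\
  upward_generic (REF E) /\
  upward_generic (fun S => IAP E S /\ CONV E S /\ CA E S /\ REF E S).
Proof.
  intros HB.
  split; [exact (part_conv E)|].
  split; [exact (part_ca E t HB)|].
  split; [exact (part_ref E)|].
  intros X lt Hlo Hinh C Hmono Hne HC.
  assert (Hconv : CONV E (fun v => exists a, C a v))
    by (apply (part_conv E X lt Hlo Hinh C Hmono Hne); intro a; apply HC).
  assert (Hca : CA E (fun v => exists a, C a v))
    by (apply (part_ca E t HB X lt Hlo Hinh C Hmono Hne); intro a; apply HC).
  assert (Href : REF E (fun v => exists a, C a v))
    by (apply (part_ref E X lt Hlo Hinh C Hmono Hne); intro a; apply HC).
  split; [|split; [exact Hconv|split; [exact Hca|exact Href]]].
  apply (part_iap E t HB X lt Hlo C Hmono); try assumption; intro a; apply HC.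
Qed.
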